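(* There exist functions $g,h:[0,1]\to\mathbb{R}$, each having a $1$-monotone graph, such that the graph of $g+h$ is not $\sigma$-monotone.
   Context: A metric space $(X,d)$ is $c$-monotone if there is a linear order $<$ on $X$ with $d(x,y)\le c\,d(x,z)$ whenever $x<y<z$; monotone if $c$-monotone for some $c>0$; $\sigma$-monotone if a countable union of monotone subspaces. Graphs are subsets of $\mathbb{R}^2$ with the Euclidean metric. *)

(* Defs.v *)
From Stdlib Require Import Reals.
Open Scope R_scope.

Definition pt := (R * R)%type.

Definition edist (p q : pt) : R :=
  sqrt ((fst p - fst q)^2 + (snd p - snd q)^2).

Definition pset := pt -> Prop.

Definition strict_linear_order_on (A : pset) (lt : pt -> pt -> Prop) : Prop :=
  (forall x, A x -> ~ lt x x) /\
  (forall x y z, A x -> A y -> A z -> lt x y -> lt y z -> lt x z) /\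
  (forall x y, A x -> A y -> x <> y -> lt x y \/ lt y x).

Definition c_monotone (c : R) (A : pset) : Prop :=
  exists lt : pt -> pt -> Prop,
    strict_linear_order_on A lt /\
    forall x y z, A x -> A y -> A z -> lt x y -> lt y z ->
      edist x y <= c * edist x z.

Definition monotone (A : pset) : Prop :=
  exists c, 0 < c /\ c_monotone c A.

Definition sigma_monotone (A : pset) : Prop :=
  exists B : nat -> pset,
    (forall n, monotone (B n)) /\
    (forall n p, B n p -> A p) /\
    (forall p, A p -> exists n, B n p).

Definition graph01 (f : R -> R) : pset :=
  fun p => 0 <= fst p <= 1 /\ snd p = f (fst p).

(* Main.v *)
Require Import Defs.
From Stdlib Require Import Reals Lra Lia Psatz Classical ZArith ClassicalEpsilon.
Open Scope R_scope.


Lemma edist_sym p q : edist p q = edist q p.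
Proof. unfold edist. f_equal. ring. Qed.

Lemma edist_nonneg p q : 0 <= edist p q.
Proof. unfold edist. apply sqrt_pos. Qed.

Lemma edist_le_abs p q : edist p q <= Rabs (fst p - fst q) + Rabs (snd p - snd q).
Proof.
  unfold edist. set (a := fst p - fst q). set (b := snd p - snd q).
  rewrite <- (sqrt_Rsqr (Rabs a + Rabs b)).
  2:{ pose proof (Rabs_pos a); pose proof (Rabs_pos b); lra. }
  apply sqrt_le_1_alt. unfold Rsqr.
  pose proof (Rabs_pos a); pose proof (Rabs_pos b).
  replace (a^2) with (Rabs a * Rabs a) by (rewrite <- Rabs_mult; rewrite Rabs_pos_eq; [ring| nra]).
  replace (b^2) with (Rabs b * Rabs b) by (rewrite <- Rabs_mult; rewrite Rabs_pos_eq; [ring| nra]).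
  nra.
Qed.

Lemma sqrt_sum_le a b c d : sqrt ((a+c)^2 + (b+d)^2) <= sqrt (a^2+b^2) + sqrt (c^2+d^2).
Proof.
  assert (HX : 0 <= a^2+b^2) by nra. assert (HY : 0 <= c^2+d^2) by nra.
  pose proof (sqrt_pos (a^2+b^2)). pose proof (sqrt_pos (c^2+d^2)).
  rewrite <- (sqrt_Rsqr (sqrt (a^2+b^2) + sqrt (c^2+d^2))) by lra.
  apply sqrt_le_1_alt. unfold Rsqr.
  pose proof (sqrt_sqrt _ HX). pose proof (sqrt_sqrt _ HY).
  assert (a*c + b*d <= sqrt (a^2+b^2) * sqrt (c^2+d^2)).
  { rewrite <- sqrt_mult by lra.
    destruct (Rle_or_lt (a*c+b*d) 0). { pose proof (sqrt_pos ((a^2+b^2)*(c^2+d^2))); lra. }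
    rewrite <- (sqrt_Rsqr (a*c+b*d)) by lra. apply sqrt_le_1_alt. unfold Rsqr. pose proof (pow2_ge_0 (a*d-b*c)); nra. }
  nra.
Qed.

Lemma edist_tri p q r : edist p r <= edist p q + edist q r.
Proof.
  unfold edist.
  replace (fst p - fst r) with ((fst p - fst q) + (fst q - fst r)) by ring.
  replace (snd p - snd r) with ((snd p - snd q) + (snd q - snd r)) by ring.
  apply sqrt_sum_le.
Qed.

Lemma edist_ge_abs_x p q : Rabs (fst p - fst q) <= edist p q.
Proof.
  unfold edist. rewrite <- sqrt_Rsqr_abs. apply sqrt_le_1_alt. unfold Rsqr. pose proof (pow2_ge_0 (snd p - snd q)); simpl; nra.
Qed.

Lemma mono_graph (g : R -> R) (s : R) :
  (s = 1 \/ s = -1) ->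
  (forall a b, 0 <= a -> a <= b -> b <= 1 -> s * g a <= s * g b) ->
  c_monotone 1 (graph01 g).
Proof.
  intros Hs Hg. exists (fun p q => fst p < fst q). split.
  - split; [|split].
    + intros x _ H; lra.
    + intros x y z _ _ _ H1 H2; lra.
    + intros [x1 x2] [y1 y2] [[Hx0 Hx1] Hx] [[Hy0 Hy1] Hy] Hne; simpl in *.
      destruct (Rtotal_order x1 y1) as [H|[H|H]]; auto.
      subst. exfalso; apply Hne; reflexivity.
  - intros [x1 x2] [y1 y2] [z1 z2] [[Hx0 Hx1] Hx] [[Hy0 Hy1] Hy] [[Hz0 Hz1] Hz] H1 H2;
    simpl in *. subst. rewrite Rmult_1_l. unfold edist; simpl.
    apply sqrt_le_1_alt.
    pose proof (Hg x1 y1 Hx0 (Rlt_le _ _ H1) Hy1).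
    pose proof (Hg y1 z1 Hy0 (Rlt_le _ _ H2) Hz1).
    assert (Hsq : s*s = 1) by (destruct Hs; subst; ring).
    assert ((g y1 - g x1)^2 <= (g z1 - g x1)^2).
    { assert (E: forall u v, (u - v)^2 = (s*u - s*v)^2).
      { intros u v. replace ((s*u-s*v)^2) with (s*s*(u-v)^2) by ring. rewrite Hsq; ring. }
      rewrite (E (g y1)), (E (g z1)). nra. }
    nra.
Qed.


Lemma edist_refl p : edist p p = 0.
Proof. unfold edist. replace ((fst p - fst p)^2 + (snd p - snd p)^2) with 0 by ring. apply sqrt_0. Qed.

Definition leo (lt : pt -> pt -> Prop) a b := lt a b \/ a = b.

Section Cyc.
Variable SS : pset.
Variable lt : pt -> pt -> Prop.
Hypothesis Hlin : strict_linear_order_on SS lt.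

Lemma leo_total x y : SS x -> SS y -> leo lt x y \/ lt y x.
Proof.
  intros Hx Hy. destruct Hlin as (_&_&Ht).
  destruct (classic (x = y)) as [->|Hne]. left; right; reflexivity.
  destruct (Ht x y Hx Hy Hne); [left; left|right]; auto.
Qed.

Lemma ivt (s : nat -> pt) (y : pt) : (forall i, SS (s i)) -> SS y -> forall n,
  leo lt (s 0%nat) y -> leo lt y (s n) ->
  (exists i, (i <= n)%nat /\ y = s i) \/
  (exists i, (i < n)%nat /\ lt (s i) y /\ lt y (s (S i))).
Proof.
  intros Hs Hy. destruct Hlin as (Hirr&Htr&_).
  induction n as [|n IH]; intros H0 H1.
  - left. exists 0%nat. split; [lia|].
    destruct H0 as [H0|H0]; destruct H1 as [H1|H1]; auto.
    exfalso; apply (Hirr (s 0%nat) (Hs 0%nat)); eauto.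
  - destruct (leo_total y (s n) Hy (Hs n)) as [Hle|Hlt].
    + destruct (IH H0 Hle) as [(i&Hi&E)|(i&Hi&E)].
      * left; exists i; split; [lia|auto].
      * right; exists i; split; [lia|auto].
    + destruct H1 as [H1|H1].
      * right; exists n; split; [lia|auto].
      * left; exists (S n); split; [lia|auto].
Qed.

Lemma exists_min (q : nat -> pt) : (forall i, SS (q i)) -> forall n,
  exists a, (a <= n)%nat /\ forall i, (i <= n)%nat -> leo lt (q a) (q i).
Proof.
  intros Hq. destruct Hlin as (Hirr&Htr&_).
  induction n as [|n (a&Ha&IH)].
  - exists 0%nat; split; [lia|]. intros i Hi; replace i with 0%nat by lia; right; auto.
  - destruct (leo_total (q a) (q (S n)) (Hq _) (Hq _)) as [Hle|Hlt].
    + exists a; split; [lia|]. intros i Hi. destruct (Nat.eq_dec i (S n)) as [->|]; auto.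
      apply IH; lia.
    + exists (S n); split; [lia|]. intros i Hi. destruct (Nat.eq_dec i (S n)) as [->|]; [right; auto|].
      destruct (IH i ltac:(lia)) as [H|H]. left; eauto. left; rewrite <- H; auto.
Qed.

Lemma exists_max (q : nat -> pt) : (forall i, SS (q i)) -> forall n,
  exists a, (a <= n)%nat /\ forall i, (i <= n)%nat -> leo lt (q i) (q a).
Proof.
  intros Hq. destruct Hlin as (Hirr&Htr&_).
  induction n as [|n (a&Ha&IH)].
  - exists 0%nat; split; [lia|]. intros i Hi; replace i with 0%nat by lia; right; auto.
  - destruct (leo_total (q (S n)) (q a) (Hq _) (Hq _)) as [Hle|Hlt].
    + exists a; split; [lia|]. intros i Hi. destruct (Nat.eq_dec i (S n)) as [->|]; auto.
      apply IH; lia.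
    + exists (S n); split; [lia|]. intros i Hi. destruct (Nat.eq_dec i (S n)) as [->|]; [right; auto|].
      destruct (IH i ltac:(lia)) as [H|H]. left; eauto. left; rewrite H; auto.
Qed.

Variable c : R.
Hypothesis Hc : 0 <= c.
Hypothesis Hmon : forall x y z, SS x -> SS y -> SS z -> lt x y -> lt y z -> edist x y <= c * edist x z.

Lemma arc_close (s : nat -> pt) (y : pt) (d : R) n :
  (forall i, SS (s i)) -> SS y -> (forall i, edist (s i) (s (S i)) <= d) ->
  leo lt (s 0%nat) y -> leo lt y (s n) ->
  exists i, (i <= n)%nat /\ edist (s i) y <= c * d.
Proof.
  intros Hs Hy Hd H0 H1.
  assert (0 <= d) by (pose proof (Hd 0%nat); pose proof (edist_nonneg (s 0%nat) (s 1%nat)); lra).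
  destruct (ivt s y Hs Hy n H0 H1) as [(i&Hi&E)|(i&Hi&E1&E2)].
  - exists i; split; auto. subst y; rewrite edist_refl. nra.
  - exists i; split; [lia|]. eapply Rle_trans. apply (Hmon _ _ _ (Hs i) Hy (Hs (S i)) E1 E2).
    apply Rmult_le_compat_l; auto.
Qed.

Lemma cycle_contra (m : nat) (q : nat -> pt) (d : R) :
  (6 <= m)%nat -> (forall i, SS (q i)) -> (forall i, q (i + m)%nat = q i) ->
  (forall i, edist (q i) (q (S i)) <= d) ->
  (forall i j, (j <= i)%nat -> (m <= 6*(i-j))%nat -> (6*(i-j) <= 5*m)%nat -> c * d < edist (q i) (q j)) ->
  False.
Proof.
  intros Hm Hq Hper Hd Hfar.
  assert (Hmod : forall i, q i = q (i mod m)).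
  { intros i. rewrite (Nat.div_mod i m) at 1 by lia.
    generalize (i / m)%nat. intros k. induction k as [|k IH].
    - f_equal; lia.
    - replace (m * S k + i mod m)%nat with ((m * k + i mod m) + m)%nat by lia. rewrite Hper; auto. }
  destruct (exists_min q Hq (m-1)) as (a&Ha&Hmin).
  destruct (exists_max q Hq (m-1)) as (b&Hb&Hmax).
  assert (Hmin' : forall i, leo lt (q a) (q i)).
  { intros i; rewrite (Hmod i). apply Hmin. pose proof (Nat.mod_upper_bound i m); lia. }
  assert (Hmax' : forall i, leo lt (q i) (q b)).
  { intros i; rewrite (Hmod i). apply Hmax. pose proof (Nat.mod_upper_bound i m); lia. }
  set (b' := if Nat.ltb b a then (b + m)%nat else b).
  assert (Hb'1 : q b' = q b) by (unfold b'; destruct (Nat.ltb b a); auto).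
  assert (Hb'2 : (a <= b' < a + m)%nat) by (unfold b'; destruct (Nat.ltb_spec b a); lia).
  set (D := (b' - a)%nat).
  destruct (Compare_dec.le_lt_dec m (2*D)) as [HD|HD].
  - (* y in arc1, use arc2 *)
    set (hh := (D / 2)%nat).
    assert (Hhh : (2*hh <= D <= 2*hh+1)%nat) by (pose proof (Nat.div_mod D 2); pose proof (Nat.mod_upper_bound D 2); unfold hh; lia).
    set (y := (a + hh)%nat).
    destruct (arc_close (fun t => q (a + m - t)%nat) (q y) d (a + m - b') (fun _ => Hq _) (Hq _))
      as (t&Ht&Hclose).
    + intros i. destruct (Compare_dec.le_lt_dec (a+m) i).
      * replace (a+m-i)%nat with 0%nat by lia. replace (a+m-S i)%nat with 0%nat by lia.
        rewrite edist_refl. pose proof (Hd 0%nat); pose proof (edist_nonneg (q 0%nat) (q 1%nat)); lra.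
      * rewrite edist_sym. replace (a+m-i)%nat with (S (a+m-S i)) by lia. apply Hd.
    + simpl. replace (a+m-0)%nat with (a+m)%nat by lia. rewrite Hper. apply Hmin'.
    + simpl. replace (a+m-(a+m-b'))%nat with b' by lia. rewrite Hb'1. apply Hmax'.
    + simpl in Hclose. assert (c*d < edist (q (a+m-t)%nat) (q y)) by (apply Hfar; unfold y, D in *; lia). lra.
  - set (E := (a + m - b')%nat).
    set (gg := (E / 2)%nat).
    assert (Hgg : (2*gg <= E <= 2*gg+1)%nat) by (pose proof (Nat.div_mod E 2); pose proof (Nat.mod_upper_bound E 2); unfold gg; lia).
    set (y := (b' + gg)%nat).
    destruct (arc_close (fun t => q (a + t)%nat) (q y) d D (fun _ => Hq _) (Hq _))
      as (t&Ht&Hclose).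
    + intros i. replace (a + S i)%nat with (S (a+i)) by lia. apply Hd.
    + simpl. replace (a+0)%nat with a by lia. apply Hmin'.
    + simpl. replace (a+D)%nat with b' by (unfold D; lia). rewrite Hb'1. apply Hmax'.
    + simpl in Hclose. rewrite edist_sym in Hclose.
      assert (c*d < edist (q y) (q (a+t)%nat)) by (apply Hfar; unfold y, E, D in *; lia). lra.
Qed.
End Cyc.


Definition th (m i : nat) : R := 2*PI*INR i / INR m.
Definition ppt (x0 y0 R : R) (m i : nat) : pt :=
  (x0 + R*(1+cos (th m i)), y0 + R*sin (th m i)).

Lemma ppt_dist x0 y0 R m i j : 0 <= R ->
  edist (ppt x0 y0 R m i) (ppt x0 y0 R m j) = 2*R*Rabs (sin ((th m i - th m j)/2)).
Proof.
  intros HR. unfold edist, ppt; cbn [fst snd].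
  replace (x0 + R * (1 + cos (th m i)) - (x0 + R * (1 + cos (th m j)))) with (R*(cos (th m i) - cos (th m j))) by ring.
  replace (y0 + R * sin (th m i) - (y0 + R * sin (th m j))) with (R*(sin (th m i) - sin (th m j))) by ring.
  rewrite form2, form4.
  set (u := sin ((th m i - th m j)/2)). set (v := sin ((th m i + th m j)/2)). set (w := cos ((th m i + th m j)/2)).
  assert (Hvw : v^2 + w^2 = 1) by (unfold v, w; rewrite <- (sin2_cos2 ((th m i + th m j)/2)); unfold Rsqr; ring).
  replace ((R * (-2 * u * v)) ^ 2 + (R * (2 * w * u)) ^ 2) with ((2*R*Rabs u)^2).
  - rewrite sqrt_pow2; auto. pose proof (Rabs_pos u); nra.
  - rewrite Rpow_mult_distr, pow2_abs. replace ((R * (-2 * u * v)) ^ 2 + (R * (2 * w * u)) ^ 2) with (4*R^2*u^2*(v^2+w^2)) by ring. rewrite Hvw; ring.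
Qed.

Lemma Rabs_sin_pos v : 0 < v -> Rabs (sin v) <= v.
Proof.
  intros Hv. pose proof (sin_lt_x v Hv). pose proof (SIN_bound v). pose proof PI_RGT_0.
  destruct (Rle_lt_dec 1 v).
  - unfold Rabs; destruct Rcase_abs; lra.
  - assert (0 <= sin v) by (apply sin_ge_0; pose proof (PI2_1); lra).
    rewrite Rabs_pos_eq; lra.
Qed.

Lemma Rabs_sin_le u : Rabs (sin u) <= Rabs u.
Proof.
  destruct (Rtotal_order u 0) as [H|[H|H]].
  - assert (E : sin u = - sin (-u)) by (rewrite sin_neg; ring).
    rewrite E, Rabs_Ropp, (Rabs_left u H). apply Rabs_sin_pos; lra.
  - subst; rewrite sin_0, Rabs_R0; lra.
  - rewrite (Rabs_pos_eq u) by lra. apply Rabs_sin_pos; lra.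
Qed.

Lemma INR_pos_nat (m : nat) : (1 <= m)%nat -> 0 < INR m.
Proof. intros; apply lt_0_INR; lia. Qed.

Lemma ppt_near x0 y0 R m i : 0 <= R -> (1 <= m)%nat ->
  edist (ppt x0 y0 R m i) (ppt x0 y0 R m (S i)) <= R * (2*PI/INR m).
Proof.
  intros HR Hm. rewrite ppt_dist by auto.
  assert (E : (th m i - th m (S i))/2 = - (PI / INR m)).
  { unfold th. rewrite S_INR. pose proof (INR_pos_nat m Hm). field. lra. }
  rewrite E, sin_neg, Rabs_Ropp. pose proof (Rabs_sin_le (PI / INR m)).
  pose proof (INR_pos_nat m Hm). pose proof PI_RGT_0.
  rewrite (Rabs_pos_eq (PI / INR m)) in H. 2:{ apply Rlt_le, Rdiv_lt_0_compat; lra. }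
  replace (R * (2*PI/INR m)) with (2*R*(PI/INR m)) by (field; lra).
  apply Rmult_le_compat_l; lra.
Qed.

Lemma sin_ge_half u : PI/6 <= u <= 5*PI/6 -> 1/2 <= sin u.
Proof.
  intros Hu. rewrite <- cos_shift. pose proof PI_RGT_0.
  rewrite <- cos_PI3.
  destruct (Rle_lt_dec 0 (PI/2 - u)).
  - apply cos_decr_1; lra.
  - rewrite (cos_sym (PI/2 - u)). apply cos_decr_1; lra.
Qed.

Lemma ppt_far x0 y0 R m i j : 0 <= R -> (1 <= m)%nat -> (j <= i)%nat ->
  (m <= 6*(i-j))%nat -> (6*(i-j) <= 5*m)%nat ->
  R <= edist (ppt x0 y0 R m i) (ppt x0 y0 R m j).
Proof.
  intros HR Hm Hji H1 H2. rewrite ppt_dist by auto.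
  assert (E : (th m i - th m j)/2 = PI * INR (i - j) / INR m).
  { unfold th. rewrite minus_INR by auto. pose proof (INR_pos_nat m Hm). field. lra. }
  rewrite E. pose proof (INR_pos_nat m Hm). pose proof PI_RGT_0.
  apply le_INR in H1. apply le_INR in H2. rewrite !mult_INR in H1, H2. rewrite ?mult_INR in H2.
  replace (INR 6) with 6 in * by (simpl; ring). replace (INR 5) with 5 in * by (simpl; ring).
  set (k := INR (i-j)) in *. set (mm := INR m) in *.
  assert (Hinv : 0 < / (6*mm)) by (apply Rinv_0_lt_compat; lra).
  assert (Hs : 1/2 <= sin (PI * k / mm)).
  { apply sin_ge_half. split.
    - assert (PI * k / mm - PI/6 = PI*(6*k - mm) * / (6*mm)) by (field; lra).
      assert (0 <= PI*(6*k - mm) * / (6*mm)) by (apply Rmult_le_pos; [apply Rmult_le_pos|]; lra). lra.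
    - assert (5*PI/6 - PI * k / mm = PI*(5*mm - 6*k) * / (6*mm)) by (field; lra).
      assert (0 <= PI*(5*mm - 6*k) * / (6*mm)) by (apply Rmult_le_pos; [apply Rmult_le_pos|]; lra). lra. }
  rewrite Rabs_pos_eq by lra. nra.
Qed.

Lemma ppt_per x0 y0 R m i : (1 <= m)%nat -> ppt x0 y0 R m (i + m) = ppt x0 y0 R m i.
Proof.
  intros Hm. unfold ppt.
  assert (E : th m (i+m) = th m i + 2 * INR 1 * PI).
  { unfold th. rewrite plus_INR. simpl. pose proof (INR_pos_nat m Hm). field. lra. }
  rewrite E, cos_period, sin_period. reflexivity.
Qed.


Definition fl (x : R) : nat := Z.to_nat (up x - 1).

Lemma fl_spec x : 0 <= x -> INR (fl x) <= x < INR (fl x) + 1.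
Proof.
  intros Hx. destruct (archimed x) as [H1 H2].
  assert (Hu : (1 <= up x)%Z).
  { apply le_IZR. assert (IZR (up x) > 0) by lra.
    assert (0 < up x)%Z by (apply lt_IZR; lra). apply IZR_le. lia. }
  unfold fl. rewrite INR_IZR_INZ, Z2Nat.id by lia. rewrite minus_IZR. simpl. lra.
Qed.

Lemma fl_unique x n : 0 <= x -> INR n <= x < INR n + 1 -> fl x = n.
Proof.
  intros Hx [H1 H2]. pose proof (fl_spec x Hx) as [H3 H4].
  assert (INR (fl x) < INR (n+1)) by (rewrite plus_INR; simpl; lra).
  assert (INR n < INR (fl x + 1)) by (rewrite plus_INR; simpl; lra).
  apply INR_lt in H. apply INR_lt in H0. lia.
Qed.

Lemma fl_mono x y : 0 <= x -> x <= y -> (fl x <= fl y)%nat.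
Proof.
  intros Hx Hxy. pose proof (fl_spec x Hx). pose proof (fl_spec y ltac:(lra)).
  assert (INR (fl x) < INR (fl y + 1)) by (rewrite plus_INR; simpl; lra).
  apply INR_lt in H1. lia.
Qed.

Lemma fl_div x P : 0 <= x -> (1 <= P)%nat -> fl (x / INR P) = (fl x / P)%nat.
Proof.
  intros Hx HP. pose proof (fl_spec x Hx) as [H1 H2].
  assert (HPr : 0 < INR P) by (apply lt_0_INR; lia).
  pose proof (Nat.div_mod (fl x) P ltac:(lia)). pose proof (Nat.mod_upper_bound (fl x) P ltac:(lia)).
  set (n := (fl x / P)%nat) in *. set (r := (fl x mod P)%nat) in *.
  apply fl_unique. { unfold Rdiv; apply Rmult_le_pos; [lra|]; left; apply Rinv_0_lt_compat; lra. }
  assert (E1 : INR (fl x) = INR P * INR n + INR r) by (rewrite H, plus_INR, mult_INR; reflexivity).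
  assert (E2 : INR r + 1 <= INR P) by (rewrite <- S_INR; apply le_INR; lia).
  pose proof (pos_INR r).
  split.
  - apply (Rmult_le_reg_r (INR P)); auto. unfold Rdiv. rewrite Rmult_assoc, Rinv_l by lra. nra.
  - apply (Rmult_lt_reg_r (INR P)); auto. unfold Rdiv. rewrite Rmult_assoc, Rinv_l by lra. nra.
Qed.


Definition mL (L : nat) : nat := 12 * (L + 1).
Definition KL (L : nat) : nat := (mL L + 1) * (2 * mL L + 1) + 1.
Definition mq (L : nat) : nat := (mL L + 1) * mL L.
Definition ML (L : nat) : nat := 2 ^ L * 4 * mq L * KL L.
Fixpoint W (L : nat) : nat := match L with O => 1%nat | S l => (W l * ML l)%nat end.
Definition hL (L : nat) : R := INR (mq L) / INR (W (S L)).

Definition rj (L j : nat) : nat := fl (INR (mL L) * (1 + cos (th (mL L) j))).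
Definition kd (L j : nat) : nat := ((mL L + 1) * rj L j + j + 1)%nat.

Definition Y (L k : nat) : R :=
  let j := ((k - 1) mod (mL L + 1))%nat in
  if (Nat.leb 1 k && Nat.ltb j (mL L) && Nat.eqb k (kd L j))%bool then sin (th (mL L) j) else 0.

Lemma mL_pos L : (12 <= mL L)%nat.
Proof. unfold mL; lia. Qed.
Lemma ML_pos L : (1 <= ML L)%nat.
Proof. unfold ML, mq, KL. pose proof (mL_pos L). pose proof (Nat.pow_le_mono_r 2 0 L ltac:(lia) ltac:(lia)). simpl in H0. nia. Qed.
Lemma W_pos L : (1 <= W L)%nat.
Proof. induction L; simpl; auto. pose proof (ML_pos L). nia. Qed.

Lemma Y_bound L k : -1 <= Y L k <= 1.
Proof. unfold Y. destruct (_ && _ && _)%bool. apply SIN_bound. lra. Qed.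

Lemma Y_0 L : Y L 0 = 0.
Proof. reflexivity. Qed.

Lemma rj_le L j : (rj L j <= 2 * mL L)%nat.
Proof.
  unfold rj. set (x := INR (mL L) * (1 + cos (th (mL L) j))).
  assert (0 <= x <= 2 * INR (mL L)) by (unfold x; pose proof (COS_bound (th (mL L) j)); pose proof (pos_INR (mL L)); nra).
  pose proof (fl_spec x ltac:(lra)).
  assert (INR (fl x) < INR (2 * mL L + 1)) by (rewrite plus_INR, mult_INR; simpl; lra).
  apply INR_lt in H1. lia.
Qed.

Lemma kd_lt L j : (j < mL L)%nat -> (kd L j < KL L)%nat.
Proof. intros. unfold kd, KL. pose proof (rj_le L j). nia. Qed.

Lemma Y_big L k : (KL L <= k)%nat -> Y L k = 0.
Proof.
  intros Hk. unfold Y. destruct (Nat.leb 1 k && Nat.ltb _ (mL L) && Nat.eqb k _)%bool eqn:E; auto.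
  apply andb_prop in E as [E E3]. apply andb_prop in E as [E1 E2].
  apply Nat.ltb_lt in E2. apply Nat.eqb_eq in E3. pose proof (kd_lt L _ E2). lia.
Qed.

Lemma Y_kd L j : (j < mL L)%nat -> Y L (kd L j) = sin (th (mL L) j).
Proof.
  intros Hj. unfold Y.
  assert (E : ((kd L j - 1) mod (mL L + 1))%nat = j).
  { unfold kd. replace ((mL L + 1) * rj L j + j + 1 - 1)%nat with (j + rj L j * (mL L + 1))%nat by lia.
    rewrite Nat.Div0.mod_add. apply Nat.mod_small. lia. }
  rewrite E. replace (Nat.leb 1 (kd L j)) with true by (symmetry; apply Nat.leb_le; unfold kd; lia).
  replace (Nat.ltb j (mL L)) with true by (symmetry; apply Nat.ltb_lt; auto).
  rewrite Nat.eqb_refl. reflexivity.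
Qed.

Fixpoint F (L n : nat) : R :=
  match n with
  | O => 0
  | S n' => F L n' + hL L * Rmax 0 (Y L (S n' mod ML L) - Y L (n' mod ML L))
  end.

Lemma hL_pos L : 0 < hL L.
Proof.
  unfold hL. apply Rdiv_lt_0_compat; apply lt_0_INR. unfold mq; pose proof (mL_pos L); nia.
  pose proof (W_pos (S L)); lia.
Qed.

Lemma inc_nonneg L n : 0 <= hL L * Rmax 0 (Y L (S n mod ML L) - Y L (n mod ML L)).
Proof. pose proof (hL_pos L). pose proof (Rmax_l 0 (Y L (S n mod ML L) - Y L (n mod ML L))). nra. Qed.

Lemma F_nonneg L n : 0 <= F L n.
Proof. induction n; simpl. lra. pose proof (inc_nonneg L n). lra. Qed.

Lemma F_mono L n k : F L n <= F L (n + k).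
Proof.
  induction k. rewrite Nat.add_0_r; lra.
  replace (n + S k)%nat with (S (n+k)) by lia. simpl. pose proof (inc_nonneg L (n+k)). lra.
Qed.

Lemma F_per L n : F L (n + ML L) = F L n + F L (ML L).
Proof.
  pose proof (ML_pos L).
  induction n. simpl; lra.
  replace (S n + ML L)%nat with (S (n + ML L)) by lia. simpl. rewrite IHn.
  replace (S (n + ML L) mod ML L)%nat with (S n mod ML L)%nat.
  2:{ replace (S (n + ML L)) with (S n + 1 * ML L)%nat by lia. rewrite Nat.Div0.mod_add. auto. }
  replace ((n + ML L) mod ML L)%nat with (n mod ML L)%nat.
  2:{ replace (n + ML L)%nat with (n + 1 * ML L)%nat by lia. rewrite Nat.Div0.mod_add. auto. }
  ring.
Qed.

Lemma F_mul L a b : F L (a * ML L + b) = INR a * F L (ML L) + F L b.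
Proof.
  induction a. simpl; lra.
  replace (S a * ML L + b)%nat with ((a * ML L + b) + ML L)%nat by lia.
  rewrite F_per, IHa, S_INR. ring.
Qed.

Lemma F_K L : F L (KL L) <= 2 * hL L * INR (KL L).
Proof.
  generalize (KL L). intros n. induction n. simpl; lra.
  simpl F. rewrite S_INR. pose proof (hL_pos L).
  pose proof (Y_bound L (S n mod ML L)). pose proof (Y_bound L (n mod ML L)).
  assert (Rmax 0 (Y L (S n mod ML L) - Y L (n mod ML L)) <= 2) by (apply Rmax_lub; lra).
  assert (hL L * Rmax 0 (Y L (S n mod ML L) - Y L (n mod ML L)) <= hL L * 2) by (apply Rmult_le_compat_l; lra).
  lra.
Qed.

Lemma KL_lt_ML L : (KL L + 2 <= ML L)%nat.
Proof.
  unfold ML, mq. pose proof (mL_pos L). pose proof (Nat.pow_le_mono_r 2 0 L ltac:(lia) ltac:(lia)). simpl in H0.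
  assert (1 <= (mL L + 1) * mL L)%nat by nia.
  assert (1 <= KL L)%nat by (unfold KL; lia).
  set (p := (2^L)%nat) in *. set (a := ((mL L + 1) * mL L)%nat) in *. set (K := KL L) in *.
  assert (1 <= p * 4 * a)%nat by nia. nia.
Qed.

Lemma F_M L : F L (ML L) = F L (KL L).
Proof.
  pose proof (KL_lt_ML L).
  assert (forall k, (KL L + k <= ML L)%nat -> F L (KL L + k) = F L (KL L)).
  { induction k; intros Hk. rewrite Nat.add_0_r; auto.
    replace (KL L + S k)%nat with (S (KL L + k)) by lia. simpl. rewrite IHk by lia.
    rewrite (Nat.mod_small (KL L + k)) by lia. rewrite (Y_big L (KL L + k)) by lia.
    destruct (Nat.eq_dec (S (KL L + k)) (ML L)) as [E|E].
    - rewrite E, Nat.Div0.mod_same, Y_0. rewrite Rminus_0_r, Rmax_left by lra. ring.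
    - rewrite Nat.mod_small by lia. rewrite Y_big by lia. rewrite Rminus_0_r, Rmax_left by lra. ring. }
  replace (ML L) with (KL L + (ML L - KL L))%nat at 1 by lia. apply H0. lia.
Qed.

Lemma F_bound L n : F L n <= INR (n / ML L + 1) * (2 * hL L * INR (KL L)).
Proof.
  pose proof (ML_pos L).
  rewrite (Nat.div_mod_eq n (ML L)) at 1. rewrite (Nat.mul_comm (ML L)), F_mul.
  pose proof (Nat.mod_upper_bound n (ML L) ltac:(lia)).
  pose proof (F_mono L (n mod ML L) (ML L - n mod ML L)).
  replace (n mod ML L + (ML L - n mod ML L))%nat with (ML L) in H1 by lia.
  rewrite F_M in *. pose proof (F_K L). pose proof (F_nonneg L (KL L)).
  rewrite plus_INR. simpl. pose proof (pos_INR (n / ML L)). nra.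
Qed.

Lemma hL_eq L : hL L = / (INR (W L) * 2^L * 4 * INR (KL L)).
Proof.
  unfold hL. simpl W. unfold ML. rewrite !mult_INR, pow_INR.
  assert (0 < INR (W L)) by (apply lt_0_INR; pose proof (W_pos L); lia).
  assert (0 < INR (mq L)) by (apply lt_0_INR; unfold mq; pose proof (mL_pos L); nia).
  assert (0 < INR (KL L)) by (apply lt_0_INR; unfold KL; lia).
  replace (INR 2) with 2 by reflexivity. replace (INR 4) with 4 by (simpl; ring).
  assert (0 < 2^L) by (apply pow_lt; lra).
  field. repeat split; lra.
Qed.

Lemma hL_le L : hL L <= (1/2)^L.
Proof.
  rewrite hL_eq. rewrite Rdiv_1_l, pow_inv. apply Rinv_le_contravar. apply pow_lt; lra.
  assert (1 <= INR (W L)) by (apply (le_INR 1); apply W_pos).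
  assert (1 <= INR (KL L)) by (apply (le_INR 1); unfold KL; lia).
  assert (0 < 2^L) by (apply pow_lt; lra).
  assert (1 <= INR (W L) * INR (KL L)) by nra.
  replace (INR (W L) * 2 ^ L * 4 * INR (KL L)) with (2^L * (4 * (INR (W L) * INR (KL L)))) by ring.
  rewrite <- (Rmult_1_r (2^L)) at 1. apply Rmult_le_compat_l; lra.
Qed.

Lemma hL_ratio L : hL (S L) * (2^(S L) * 4) <= hL L.
Proof.
  rewrite (hL_eq (S L)), (hL_eq L).
  assert (1 <= INR (W L)) by (apply (le_INR 1); apply W_pos).
  assert (1 <= INR (KL L)) by (apply (le_INR 1); unfold KL; lia).
  assert (1 <= INR (KL (S L))) by (apply (le_INR 1); unfold KL; lia).
  assert (0 < 2^L) by (apply pow_lt; lra).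
  assert (1 <= INR (mq L)) by (apply (le_INR 1); unfold mq; pose proof (mL_pos L); nia).
  assert (EW : INR (W (S L)) = INR (W L) * 2^L * 4 * INR (mq L) * INR (KL L)).
  { simpl W. unfold ML. rewrite !mult_INR, pow_INR. replace (INR 2) with 2 by reflexivity. replace (INR 4) with 4 by (simpl; ring). ring. }
  rewrite EW. simpl pow.
  set (a := INR (W L)) in *. set (b := 2^L) in *. set (k := INR (KL L)) in *. set (q := INR (mq L)) in *. set (k' := INR (KL (S L))) in *.
  replace (/ (a * b * 4 * q * k * (2 * b) * 4 * k') * (2 * b * 4)) with (/ (a*b*4*k) * / (q * k')) by (field; repeat split; lra).
  rewrite <- (Rmult_1_r (/ (a*b*4*k))) at 2. apply Rmult_le_compat_l.
  left; apply Rinv_0_lt_compat; repeat apply Rmult_lt_0_compat; lra.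
  rewrite <- Rinv_1. apply Rinv_le_contravar. lra. rewrite <- (Rmult_1_r 1). apply Rmult_le_compat; lra.
Qed.

Definition P (L : nat) (t : R) : R := F L (fl (t * INR (W (S L)))).
Definition uL (L : nat) (t : R) : R := hL L * Y L (fl (t * INR (W (S L))) mod ML L).
Definition N (L : nat) (t : R) : R := P L t - uL L t + hL L.
Definition v (L : nat) (t : R) : R := uL L t - hL L.

Lemma fl_INR n : fl (INR n) = n.
Proof. apply fl_unique. apply pos_INR. lra. Qed.

Lemma P_bound L t : 0 <= t <= 1 -> 0 <= P L t <= (1/2)^L.
Proof.
  intros Ht. split. apply F_nonneg. unfold P.
  pose proof (ML_pos L).
  assert (Hfl : (fl (t * INR (W (S L))) <= W (S L))%nat).
  { rewrite <- (fl_INR (W (S L))) at 2. apply fl_mono. pose proof (pos_INR (W (S L))); nra.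
    pose proof (pos_INR (W (S L))); nra. }
  assert (Hd : (fl (t * INR (W (S L))) / ML L <= W L)%nat).
  { transitivity (W (S L) / ML L)%nat. apply Nat.Div0.div_le_mono; auto.
    simpl W. rewrite Nat.div_mul; lia. }
  eapply Rle_trans. apply F_bound.
  apply le_INR in Hd. change (W L * ML L)%nat with (W (S L)) in *. rewrite plus_INR. change (INR 1) with 1.
  pose proof (hL_pos L). assert (1 <= INR (W L)) by (apply (le_INR 1); apply W_pos).
  assert (0 < INR (KL L)) by (apply lt_0_INR; unfold KL; lia).
  apply Rle_trans with (INR (W L + 1) * (2 * hL L * INR (KL L))).
  { rewrite plus_INR. change (INR 1) with 1. apply Rmult_le_compat_r; [left; apply Rmult_lt_0_compat; [apply Rmult_lt_0_compat|]; lra | lra]. }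
  rewrite plus_INR. change (INR 1) with 1.
  apply Rle_trans with (4 * hL L * INR (KL L) * INR (W L)).
  { assert (0 < 2 * hL L * INR (KL L)) by (apply Rmult_lt_0_compat; [apply Rmult_lt_0_compat|]; lra).
    replace (4 * hL L * INR (KL L) * INR (W L)) with ((2 * hL L * INR (KL L)) * (2 * INR (W L))) by ring.
    rewrite (Rmult_comm (INR (W L) + 1)). apply Rmult_le_compat_l; lra. }
  rewrite hL_eq, Rdiv_1_l, pow_inv. right. assert (0 < 2^L) by (apply pow_lt; lra). field. repeat split; lra.
Qed.

Lemma uL_bound L t : Rabs (uL L t) <= hL L.
Proof.
  unfold uL. pose proof (hL_pos L). pose proof (Y_bound L (fl (t * INR (W (S L))) mod ML L)).
  rewrite Rabs_mult, Rabs_pos_eq by lra. unfold Rabs; destruct Rcase_abs; nra.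
Qed.

Lemma N_bound L t : 0 <= t <= 1 -> 0 <= N L t <= 3 * (1/2)^L.
Proof.
  intros Ht. unfold N. pose proof (P_bound L t Ht). pose proof (uL_bound L t). pose proof (hL_le L).
  unfold Rabs in H0; destruct Rcase_abs in H0; lra.
Qed.

From Coquelicot Require Import Coquelicot.

Lemma exs (a : nat -> R) (C : R) : (forall n, Rabs (a n) <= C * (1/2)^n) -> ex_series a.
Proof.
  intros H. apply (ex_series_le a (fun n => C * (1/2)^n)).
  - intros n. apply H.
  - apply (ex_series_scal_l C (fun n => (1/2)^n)). apply ex_series_geom. rewrite Rabs_pos_eq; lra.
Qed.

Lemma P_mono L s t : 0 <= s -> s <= t -> P L s <= P L t.
Proof.
  intros Hs Hst. unfold P.
  assert (0 <= INR (W (S L))) by apply pos_INR.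
  pose proof (fl_mono (s * INR (W (S L))) (t * INR (W (S L))) ltac:(nra) ltac:(nra)).
  replace (fl (t * INR (W (S L)))) with (fl (s * INR (W (S L))) + (fl (t * INR (W (S L))) - fl (s * INR (W (S L)))))%nat by lia.
  apply F_mono.
Qed.

Definition G (L n : nat) : R := F L n - hL L * Y L (n mod ML L).

Lemma G_mono L n k : G L n <= G L (n + k).
Proof.
  induction k. rewrite Nat.add_0_r; lra.
  replace (n + S k)%nat with (S (n+k)) by lia. unfold G in *. simpl F.
  pose proof (hL_pos L).
  pose proof (Rmax_r 0 (Y L (S (n + k) mod ML L) - Y L ((n + k) mod ML L))).
  assert (hL L * (Y L (S (n + k) mod ML L) - Y L ((n + k) mod ML L)) <=
          hL L * Rmax 0 (Y L (S (n + k) mod ML L) - Y L ((n + k) mod ML L))) by (apply Rmult_le_compat_l; lra).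
  lra.
Qed.

Lemma N_mono L s t : 0 <= s -> s <= t -> N L s <= N L t.
Proof.
  intros Hs Hst. unfold N, P, uL.
  assert (0 <= INR (W (S L))) by apply pos_INR.
  pose proof (fl_mono (s * INR (W (S L))) (t * INR (W (S L))) ltac:(nra) ltac:(nra)).
  pose proof (G_mono L (fl (s * INR (W (S L)))) (fl (t * INR (W (S L))) - fl (s * INR (W (S L))))).
  replace (fl (s * INR (W (S L))) + (fl (t * INR (W (S L))) - fl (s * INR (W (S L)))))%nat with (fl (t * INR (W (S L)))) in H1 by lia.
  unfold G in H1. lra.
Qed.

Definition gfun (t : R) : R := Series (fun L => P L t).
Definition hfun (t : R) : R := - Series (fun L => N L t).

Lemma exP t : 0 <= t <= 1 -> ex_series (fun L => P L t).
Proof.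
  intros Ht. apply (exs _ 1). intros n. pose proof (P_bound n t Ht). rewrite Rabs_pos_eq; lra.
Qed.
Lemma exN t : 0 <= t <= 1 -> ex_series (fun L => N L t).
Proof.
  intros Ht. apply (exs _ 3). intros n. pose proof (N_bound n t Ht). rewrite Rabs_pos_eq; lra.
Qed.
Lemma exv t : ex_series (fun L => v L t).
Proof.
  apply (exs _ 2). intros n. unfold v. pose proof (uL_bound n t). pose proof (hL_le n). pose proof (hL_pos n).
  eapply Rle_trans. apply Rabs_triang. rewrite Rabs_Ropp, (Rabs_pos_eq (hL n)) by lra. lra.
Qed.

Lemma g_mono a b : 0 <= a -> a <= b -> b <= 1 -> 1 * gfun a <= 1 * gfun b.
Proof.
  intros. rewrite !Rmult_1_l. unfold gfun. apply Series_le.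
  - intros n. split. apply (P_bound n a); lra. apply P_mono; lra.
  - apply exP; lra.
Qed.

Lemma h_mono a b : 0 <= a -> a <= b -> b <= 1 -> -1 * hfun a <= -1 * hfun b.
Proof.
  intros. unfold hfun. replace (-1 * - Series (fun L => N L a)) with (Series (fun L => N L a)) by ring.
  replace (-1 * - Series (fun L => N L b)) with (Series (fun L => N L b)) by ring.
  apply Series_le.
  - intros n. split. apply (N_bound n a); lra. apply N_mono; lra.
  - apply exN; lra.
Qed.

Lemma f_series t : 0 <= t <= 1 -> gfun t + hfun t = Series (fun L => v L t).
Proof.
  intros Ht. unfold gfun, hfun.
  replace (Series (fun L => P L t) + - Series (fun L => N L t)) with (Series (fun L => P L t) - Series (fun L => N L t)) by ring.
  rewrite <- Series_minus by (apply exP || apply exN; auto).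
  apply Series_ext. intros n. unfold N, v. ring.
Qed.

Lemma v_bound L t : Rabs (v L t) <= 2 * hL L.
Proof.
  unfold v. pose proof (uL_bound L t). pose proof (hL_pos L).
  eapply Rle_trans. apply Rabs_triang. rewrite Rabs_Ropp, (Rabs_pos_eq (hL L)) by lra. lra.
Qed.

Lemma hL_geom L k : hL (S L + k) <= hL (S L) * (1/2)^k.
Proof.
  induction k. rewrite Nat.add_0_r; simpl; lra.
  replace (S L + S k)%nat with (S (S L + k)) by lia.
  pose proof (hL_ratio (S L + k)). pose proof (hL_pos (S (S L + k))).
  assert (2 <= 2 ^ S (S L + k) * 4).
  { assert (1 <= 2 ^ S (S L + k)) by (apply pow_R1_Rle; lra). lra. }
  assert (hL (S (S L + k)) * 2 <= hL (S L + k)).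
  { eapply Rle_trans; [|apply H]. apply Rmult_le_compat_l; lra. }
  simpl pow. lra.
Qed.

Lemma tail_bound L t : Rabs (Series (fun k => v (S L + k) t)) <= hL L * (1/2)^(S L).
Proof.
  assert (Hb : forall k, 0 <= Rabs (v (S L + k) t) <= 2 * hL (S L) * (1/2)^k).
  { intros k. split. apply Rabs_pos. eapply Rle_trans. apply v_bound.
    pose proof (hL_geom L k). lra. }
  assert (Hexb : ex_series (fun k => 2 * hL (S L) * (1/2)^k)).
  { apply (ex_series_scal_l (2 * hL (S L)) (fun n => (1/2)^n)). apply ex_series_geom. rewrite Rabs_pos_eq; lra. }
  assert (Hexa : ex_series (fun k => Rabs (v (S L + k) t))).
  { apply (exs _ (2 * hL (S L))). intros n. rewrite Rabs_Rabsolu. apply Hb. }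
  eapply Rle_trans. apply Series_Rabs; auto.
  eapply Rle_trans. apply (Series_le _ (fun k => 2*hL(S L)*(1/2)^k)); auto.
  rewrite (Series_scal_l (2 * hL (S L)) (fun k => (1/2)^k)), Series_geom by (rewrite Rabs_pos_eq; lra).
  pose proof (hL_ratio L). rewrite Rdiv_1_l, pow_inv.
  assert (0 < 2 ^ S L) by (apply pow_lt; lra).
  replace (2 * hL (S L) * / (1 - / 2)) with (4 * hL (S L)) by field.
  apply (Rmult_le_reg_r (2 ^ S L)); auto. rewrite (Rmult_assoc (hL L)), Rinv_l by lra. lra.
Qed.

Definition inode (L n : nat) (t : R) : Prop := INR n <= t * INR (W L) < INR n + 1.

Lemma inode_fl L n t : 0 <= t -> inode L n t -> fl (t * INR (W L)) = n.
Proof. intros Ht H. apply fl_unique; auto. pose proof (pos_INR (W L)); nra. Qed.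

Fixpoint Mp (L s : nat) : nat := match s with O => 1%nat | S s' => (Mp L s' * ML (L + s'))%nat end.

Lemma W_add L s : W (L + s) = (W L * Mp L s)%nat.
Proof.
  induction s. simpl. rewrite Nat.add_0_r; lia.
  replace (L + S s)%nat with (S (L + s)) by lia. simpl. rewrite IHs. lia.
Qed.

Lemma Mp_pos L s : (1 <= Mp L s)%nat.
Proof. induction s; simpl; auto. pose proof (ML_pos (L+s)). nia. Qed.

Lemma fl_coarse t l L' : 0 <= t -> (l <= L')%nat ->
  fl (t * INR (W l)) = (fl (t * INR (W L')) / Mp l (L' - l))%nat.
Proof.
  intros Ht Hl. rewrite <- fl_div. 2:{ pose proof (pos_INR (W L')); nra. } 2: apply Mp_pos.
  f_equal. replace L' with (l + (L' - l))%nat at 1 by lia. rewrite W_add, mult_INR.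
  assert (0 < INR (Mp l (L' - l))) by (apply lt_0_INR; pose proof (Mp_pos l (L'-l)); lia).
  field. lra.
Qed.

Lemma uL_const l L' t t' : 0 <= t -> 0 <= t' -> (l < L')%nat ->
  fl (t * INR (W L')) = fl (t' * INR (W L')) -> uL l t = uL l t'.
Proof.
  intros Ht Ht' Hl E. unfold uL. rewrite (fl_coarse t (S l) L'), (fl_coarse t' (S l) L'), E; auto; lia.
Qed.

Lemma child_digit L NV k t : 0 <= t -> (k < ML L)%nat -> inode (S L) (NV * ML L + k) t ->
  fl (t * INR (W (S L))) mod ML L = k /\ fl (t * INR (W L)) = NV.
Proof.
  intros Ht Hk H. pose proof (inode_fl _ _ _ Ht H) as E. split.
  - rewrite E. rewrite Nat.add_comm, Nat.Div0.mod_add. apply Nat.mod_small; auto.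
  - rewrite (fl_coarse t L (S L)) by (auto; lia). replace (S L - L)%nat with 1%nat by lia.
    change (Mp L 1) with (1 * ML (L+0))%nat; rewrite Nat.add_0_r, Nat.mul_1_l. rewrite E.
    rewrite Nat.add_comm, Nat.div_add by (pose proof (ML_pos L); lia). rewrite Nat.div_small; auto.
Qed.

Lemma inode_of_fl L n t : 0 <= t -> fl (t * INR (W L)) = n -> inode L n t.
Proof.
  intros Ht E. pose proof (fl_spec (t * INR (W L))). rewrite E in H. unfold inode.
  apply H. pose proof (pos_INR (W L)); nra.
Qed.

Definition f01 (t : R) : R := gfun t + hfun t.

Lemma x_child Lc NV j t : 0 <= t -> (j < mL Lc)%nat -> inode (S Lc) (NV * ML Lc + kd Lc j) t ->
  Rabs (t - (INR NV / INR (W Lc) + hL Lc * (1 + cos (th (mL Lc) j)))) <= hL Lc / INR (mL Lc).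
Proof.
  intros Ht Hj H. unfold inode in H.
  set (m := mL Lc) in *. set (M := ML Lc) in *.
  assert (Hw : INR (W (S Lc)) = INR (W Lc) * INR M) by (simpl W; rewrite mult_INR; reflexivity).
  assert (HWc : 0 < INR (W Lc)) by (apply lt_0_INR; pose proof (W_pos Lc); lia).
  assert (HM : 0 < INR M) by (apply lt_0_INR; pose proof (ML_pos Lc); lia).
  assert (Hm : 12 <= INR m) by (replace 12 with (INR 12) by (simpl; ring); apply le_INR; apply mL_pos).
  set (z := INR m * (1 + cos (th m j))).
  assert (Hz : 0 <= z) by (unfold z; pose proof (COS_bound (th m j)); nra).
  pose proof (fl_spec z Hz) as Hr.
  assert (Hkd : INR (kd Lc j) = (INR m + 1) * INR (rj Lc j) + INR j + 1).
  { unfold kd. rewrite !plus_INR, mult_INR. fold m. rewrite plus_INR. change (INR 1) with 1. reflexivity. }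
  assert (Hrj : rj Lc j = fl z) by reflexivity.
  rewrite Hrj in Hkd.
  assert (Hj' : INR j + 1 <= INR m) by (rewrite <- S_INR; apply le_INR; lia).
  pose proof (pos_INR j).
  rewrite plus_INR, mult_INR, Hkd in H. rewrite Hw in H.
  unfold hL. rewrite Hw. unfold mq. rewrite mult_INR, plus_INR. fold m M. change (INR 1) with 1.
  set (w := INR (W Lc)) in *. set (NVr := INR NV) in *. set (r := INR (fl z)) in *.
  set (mm := INR m) in *. set (MM := INR M) in *.
  replace ((mm + 1) * mm / (w * MM) * (1 + cos (th m j))) with ((mm+1) * z / (w * MM)) by (unfold z; field; lra).
  replace ((mm + 1) * mm / (w * MM) / mm) with ((mm+1) / (w*MM)) by (field; lra).
  replace (t - (NVr / w + (mm + 1) * z / (w * MM))) with ((t * (w * MM) - NVr * MM - (mm+1) * z) / (w * MM)) by (field; lra).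
  assert (0 < w * MM) by (apply Rmult_lt_0_compat; lra).
  unfold Rdiv. rewrite Rabs_mult, (Rabs_pos_eq (/ (w*MM))) by (left; apply Rinv_0_lt_compat; lra).
  apply Rmult_le_compat_r. left; apply Rinv_0_lt_compat; lra.
  apply Rabs_le. split; nra.
Qed.

Lemma y_child Lp NV j t : 0 <= t <= 1 -> (j < mL (S Lp))%nat ->
  inode (S (S Lp)) (NV * ML (S Lp) + kd (S Lp) j) t ->
  Rabs (f01 t - (sum_f_R0 (fun l => v l (INR NV / INR (W (S Lp)))) Lp - hL (S Lp)
                 + hL (S Lp) * sin (th (mL (S Lp)) j))) <= hL (S Lp) * (1/2)^(S (S Lp)).
Proof.
  intros Ht Hj H. set (Lc := S Lp) in *.
  set (x0 := INR NV / INR (W Lc)).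
  assert (HWc : 0 < INR (W Lc)) by (apply lt_0_INR; pose proof (W_pos Lc); lia).
  assert (Hx0 : 0 <= x0) by (unfold x0; apply Rmult_le_pos; [apply pos_INR| left; apply Rinv_0_lt_compat; lra]).
  pose proof (kd_lt Lc j Hj). pose proof (KL_lt_ML Lc).
  destruct (child_digit Lc NV (kd Lc j) t ltac:(lra) ltac:(lia) H) as [Hd Hnode].
  assert (Hx0n : fl (x0 * INR (W Lc)) = NV).
  { unfold x0. replace (INR NV / INR (W Lc) * INR (W Lc)) with (INR NV) by (field; lra). apply fl_INR. }
  unfold f01. rewrite f_series by auto.
  rewrite (Series_incr_n _ (S Lc)) by (lia || apply exv). simpl pred.
  unfold Lc at 1. rewrite tech5.
  rewrite (sum_eq (fun l => v l t) (fun l => v l x0)).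
  2:{ intros i Hi. unfold v. rewrite (uL_const i Lc t x0); try lra; try lia. }
  assert (Hv : v Lc t = hL Lc * sin (th (mL Lc) j) - hL Lc).
  { unfold v, uL. rewrite Hd, Y_kd; auto. }
  fold Lc. rewrite Hv.
  replace (sum_f_R0 (fun l : nat => v l x0) Lp + (hL Lc * sin (th (mL Lc) j) - hL Lc) + Series (fun k : nat => v (S Lc + k) t) -
   (sum_f_R0 (fun l : nat => v l x0) Lp - hL Lc + hL Lc * sin (th (mL Lc) j))) with (Series (fun k : nat => v (S Lc + k) t)) by ring.
  apply tail_bound.
Qed.



Lemma nest (a A k WL : nat) : (1 <= A)%nat -> (1 <= WL)%nat -> (k + 1 < A)%nat ->
  INR a / INR WL <= INR (a*A + k) / INR (WL*A) /\
  (INR (a*A+k) + 1) / INR (WL*A) < (INR a + 1) / INR WL.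
Proof.
  intros HA HW Hk.
  assert (HAr : 1 <= INR A) by (apply (le_INR 1); auto).
  assert (HWr : 1 <= INR WL) by (apply (le_INR 1); auto).
  assert (Hkr : INR k + 1 < INR A) by (rewrite <- S_INR; apply lt_INR; lia).
  pose proof (pos_INR k). pose proof (pos_INR a).
  rewrite plus_INR, !mult_INR. split.
  - assert (E : (INR a * INR A + INR k) / (INR WL * INR A) - INR a / INR WL = INR k * / (INR WL * INR A)) by (field; lra).
    assert (0 <= INR k * / (INR WL * INR A)).
    { apply Rmult_le_pos; auto. left; apply Rinv_0_lt_compat, Rmult_lt_0_compat; lra. }
    lra.
  - assert (E : (INR a + 1) / INR WL - (INR a * INR A + INR k + 1) / (INR WL * INR A) = (INR A - INR k - 1) * / (INR WL * INR A)) by (field; lra).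
    assert (0 < (INR A - INR k - 1) * / (INR WL * INR A)).
    { apply Rmult_lt_0_compat. lra. apply Rinv_0_lt_compat, Rmult_lt_0_compat; lra. }
    lra.
Qed.

Lemma pow2_ge n : INR n <= 2 ^ n.
Proof.
  induction n. simpl; lra. rewrite S_INR. simpl. assert (1 <= 2^n) by (apply pow_R1_Rle; lra). lra.
Qed.

Lemma ppt_mod x0 y0 R m i : (1 <= m)%nat -> ppt x0 y0 R m i = ppt x0 y0 R m (i mod m).
Proof.
  intros Hm. rewrite (Nat.div_mod i m) at 1 by lia.
  generalize (i / m)%nat. intros k. induction k as [|k IH].
  - f_equal; lia.
  - replace (m * S k + i mod m)%nat with ((m * k + i mod m) + m)%nat by lia. rewrite ppt_per; auto.
Qed.

Lemma numeric (c R : R) (Lc : nat) : 0 <= c -> 0 < R -> 5 * c + 4 < INR (S Lc) ->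
  c * (R * (2 * PI / INR (mL Lc)) + 2 * (R / INR (mL Lc) + R * (1/2)^(S Lc))) <
  R - 2 * (R / INR (mL Lc) + R * (1/2)^(S Lc)).
Proof.
  intros Hc HR Hn.
  set (n1 := INR (S Lc)) in *.
  assert (Hn1 : 0 < n1) by (unfold n1; apply lt_0_INR; lia).
  assert (Hm : INR (mL Lc) = 12 * n1). { unfold mL, n1. rewrite mult_INR. replace (Lc+1)%nat with (S Lc) by lia. replace (INR 12) with 12 by (simpl; ring). reflexivity. }
  rewrite Hm. pose proof PI_4. pose proof PI_RGT_0.
  assert (Hp : (1/2)^(S Lc) <= / n1).
  { rewrite Rdiv_1_l, pow_inv. apply Rinv_le_contravar; auto. apply pow2_ge. }
  assert (H1 : R * (2 * PI / (12 * n1)) <= R * / n1).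
  { apply Rmult_le_compat_l; [lra|]. unfold Rdiv. rewrite Rinv_mult.
    assert (0 < / n1) by (apply Rinv_0_lt_compat; lra).
    replace (2 * PI * (/ 12 * / n1)) with ((2*PI/12) * / n1) by (field; lra).
    rewrite <- (Rmult_1_l (/ n1)) at 2. apply Rmult_le_compat_r; lra. }
  assert (H2 : R / (12 * n1) <= R * / n1).
  { unfold Rdiv. rewrite Rinv_mult. assert (0 < / n1) by (apply Rinv_0_lt_compat; lra). nra. }
  assert (H3 : R * (1/2)^(S Lc) <= R * / n1) by (apply Rmult_le_compat_l; lra).
  set (e := R * / n1) in *.
  assert (He : (5 * c + 4) * e < R).
  { unfold e. replace R with (R * (n1 * / n1)) at 2 by (field; lra).
    replace ((5 * c + 4) * (R * / n1)) with (R * ((5*c+4) * / n1)) by ring.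
    apply Rmult_lt_compat_l; auto. apply Rmult_lt_compat_r; auto. apply Rinv_0_lt_compat; lra. }
  assert (0 <= e) by (unfold e; apply Rmult_le_pos; [lra| left; apply Rinv_0_lt_compat; lra]).
  assert (c * (R * (2 * PI / (12 * n1)) + 2 * (R / (12 * n1) + R * (1 / 2) ^ S Lc)) <= c * (5 * e)).
  { apply Rmult_le_compat_l; lra. }
  lra.
Qed.

Lemma stage (B : pset) (c : R) (L Nn : nat) :
  0 < c -> c_monotone c B -> (forall p, B p -> graph01 f01 p) -> (Nn < W L)%nat ->
  exists L' N', (L < L')%nat /\ (N' < W L')%nat /\
   INR Nn / INR (W L) <= INR N' / INR (W L') /\
   (INR N' + 1) / INR (W L') < (INR Nn + 1) / INR (W L) /\
   forall t, 0 <= t <= 1 -> inode L' N' t -> ~ B (t, f01 t).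
Proof.
  intros Hc Hmono HB HN.
  set (s := S (fl (5*c+5))).
  set (Lp := (L + fl (5*c+5))%nat).
  set (Lc := S Lp).
  assert (HLc : Lc = (L + s)%nat) by (unfold Lc, Lp, s; lia).
  set (NV := (Nn * Mp L s)%nat).
  set (m := mL Lc). set (M := ML Lc). set (R := hL Lc).
  set (child := fun j => (NV * M + kd Lc j)%nat).
  assert (HWc : W Lc = (W L * Mp L s)%nat) by (rewrite HLc; apply W_add).
  assert (HWS : W (S Lc) = (W Lc * M)%nat) by reflexivity.
  pose proof (Mp_pos L s) as HMp. pose proof (ML_pos Lc) as HM. pose proof (W_pos L) as HWL.
  pose proof (KL_lt_ML Lc) as HKM.
  assert (Hchild : forall j, (j < m)%nat ->
    (L < S Lc)%nat /\ (child j < W (S Lc))%nat /\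
    INR Nn / INR (W L) <= INR (child j) / INR (W (S Lc)) /\
    (INR (child j) + 1) / INR (W (S Lc)) < (INR Nn + 1) / INR (W L)).
  { intros j Hj. pose proof (kd_lt Lc j Hj).
    assert (E1 : child j = (Nn * (Mp L s * M) + kd Lc j)%nat) by (unfold child, NV; lia).
    assert (E2 : W (S Lc) = (W L * (Mp L s * M))%nat) by (rewrite HWS, HWc; lia).
    destruct (nest Nn (Mp L s * M) (kd Lc j) (W L)) as [N1 N2]; try nia.
    repeat split.
    - lia.
    - rewrite E1, E2. fold M in HKM.
      assert ((Nn+1)*(Mp L s * M) <= W L*(Mp L s * M))%nat by (apply Nat.mul_le_mono_r; lia).
      assert (M <= Mp L s * M)%nat by nia. lia.
    - rewrite E1, E2. auto.
    - rewrite E1, E2. auto. }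
  destruct (classic (exists j, (j < m)%nat /\ forall t, 0 <= t <= 1 -> inode (S Lc) (child j) t -> ~ B (t, f01 t)))
    as [(j&Hj&Hno)|Hall].
  { exists (S Lc), (child j). destruct (Hchild j Hj) as (?&?&?&?). repeat split; auto. }
  exfalso.
  assert (Hex : forall j, exists t, (j < m)%nat -> 0 <= t <= 1 /\ inode (S Lc) (child j) t /\ B (t, f01 t)).
  { intros j. destruct (Compare_dec.lt_dec j m) as [Hj|Hj].
    - destruct (classic (exists t, 0 <= t <= 1 /\ inode (S Lc) (child j) t /\ B (t, f01 t))) as [(t&Ht)|Hn].
      + exists t; auto.
      + exfalso; apply Hall; exists j; split; auto. intros t Ht Hi HBt; apply Hn; exists t; auto.
    - exists 0; intros; lia. }
  set (tt := fun j => proj1_sig (constructive_indefinite_description _ (Hex j))).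
  assert (Htt : forall j, (j < m)%nat -> 0 <= tt j <= 1 /\ inode (S Lc) (child j) (tt j) /\ B (tt j, f01 (tt j))).
  { intros j Hj. exact (proj2_sig (constructive_indefinite_description _ (Hex j)) Hj). }
  destruct Hmono as (lt & Hlin & Hmon).
  assert (Hm6 : (6 <= m)%nat) by (pose proof (mL_pos Lc); unfold m; lia).
  set (q := fun i => (tt (i mod m), f01 (tt (i mod m)))).
  set (x0 := INR NV / INR (W Lc)).
  set (C := sum_f_R0 (fun l => v l x0) Lp).
  set (p := ppt x0 (C - R) R m).
  set (eps := R / INR m + R * (1/2)^(S Lc)).
  assert (HR : 0 < R) by apply hL_pos.
  assert (Hpert : forall i, edist (q i) (p i) <= eps).
  { intros i. assert (Hj : (i mod m < m)%nat) by (apply Nat.mod_upper_bound; lia).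
    set (j := (i mod m)%nat) in *.
    unfold p. rewrite (ppt_mod x0 (C-R) R m i) by lia. fold j.
    destruct (Htt j Hj) as (Ht&Hi&_).
    eapply Rle_trans. apply edist_le_abs. unfold q, ppt; cbn [fst snd]. fold j.
    pose proof (x_child Lc NV j (tt j) ltac:(lra) Hj Hi) as Hx.
    pose proof (y_child Lp NV j (tt j) Ht Hj Hi) as Hy.
    fold Lc m R in Hx, Hy. fold x0 in Hx. fold x0 C in Hy.
    unfold eps. apply Rplus_le_compat. exact Hx.
    replace (C - R + R * sin (th m j)) with (C - R + R * sin (th m j)) by ring.
    replace (C - R + R * sin (th m j)) with (C - R + R * sin (th m j)) in Hy by ring.
    exact Hy. }
  assert (Hm1 : (1 <= m)%nat) by lia.
  assert (Hnum : c * (R * (2 * PI / INR m) + 2 * eps) < R - 2 * eps).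
  { apply numeric; try lra. unfold Lc, Lp. pose proof (fl_spec (5*c+5) ltac:(lra)).
    rewrite !S_INR, plus_INR. pose proof (pos_INR L). lra. }
  apply (cycle_contra B lt Hlin c (Rlt_le _ _ Hc) Hmon m q (R * (2 * PI / INR m) + 2 * eps) Hm6).
  - intros i. apply (Htt (i mod m)%nat). apply Nat.mod_upper_bound; lia.
  - intros i. unfold q. replace ((i + m) mod m)%nat with (i mod m)%nat; auto.
    replace (i + m)%nat with (i + 1 * m)%nat by lia. rewrite Nat.Div0.mod_add. auto.
  - intros i. eapply Rle_trans. apply (edist_tri _ (p i)).
    eapply Rle_trans. apply Rplus_le_compat_l. apply (edist_tri _ (p (S i))).
    pose proof (Hpert i). pose proof (Hpert (S i)). rewrite (edist_sym (p (S i))) in *.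
    pose proof (ppt_near x0 (C - R) R m i ltac:(lra) Hm1). fold p in H1. lra.
  - intros i j Hji H1 H2.
    pose proof (ppt_far x0 (C - R) R m i j ltac:(lra) Hm1 Hji H1 H2). fold p in H.
    pose proof (edist_tri (p i) (q i) (p j)). pose proof (edist_tri (q i) (q j) (p j)).
    pose proof (Hpert i). pose proof (Hpert j). rewrite edist_sym in H4. lra.
Qed.

Theorem corollary7p7 :
  exists g h : R -> R,
    c_monotone 1 (graph01 g) /\ c_monotone 1 (graph01 h) /\
    ~ sigma_monotone (graph01 (fun x => g x + h x)).
Proof.
  exists gfun, hfun. split; [|split].
  - apply (mono_graph gfun 1); [left; reflexivity|]. apply g_mono.
  - apply (mono_graph hfun (-1)); [right; reflexivity|]. apply h_mono.
  - change (graph01 (fun x => gfun x + hfun x)) with (graph01 f01).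
    intros (Bs & Hmon & Hsub & Hcov).
    assert (Hnext : forall n (nd : nat * nat), exists nd' : nat * nat,
      (snd nd < W (fst nd))%nat ->
      (snd nd' < W (fst nd'))%nat /\
      INR (snd nd) / INR (W (fst nd)) <= INR (snd nd') / INR (W (fst nd')) /\
      (INR (snd nd') + 1) / INR (W (fst nd')) < (INR (snd nd) + 1) / INR (W (fst nd)) /\
      forall t, 0 <= t <= 1 -> inode (fst nd') (snd nd') t -> ~ Bs n (t, f01 t)).
    { intros n [L Nn]. destruct (classic (Nn < W L)%nat) as [HN|HN].
      - destruct (Hmon n) as (c & Hc & Hcm).
        destruct (stage (Bs n) c L Nn Hc Hcm (Hsub n) HN) as (L' & N' & _ & H1 & H2 & H3 & H4).
        exists (L', N'). intros _. simpl. auto.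
      - exists (0%nat, 0%nat). intros H; simpl in H; contradiction. }
    set (next := fun n nd => proj1_sig (constructive_indefinite_description _ (Hnext n nd))).
    assert (Hnx : forall n nd, (snd nd < W (fst nd))%nat ->
      (snd (next n nd) < W (fst (next n nd)))%nat /\
      INR (snd nd) / INR (W (fst nd)) <= INR (snd (next n nd)) / INR (W (fst (next n nd))) /\
      (INR (snd (next n nd)) + 1) / INR (W (fst (next n nd))) < (INR (snd nd) + 1) / INR (W (fst nd)) /\
      forall t, 0 <= t <= 1 -> inode (fst (next n nd)) (snd (next n nd)) t -> ~ Bs n (t, f01 t)).
    { intros n nd H. exact (proj2_sig (constructive_indefinite_description _ (Hnext n nd)) H). }
    set (nodes := fix nodes (k : nat) : nat * nat := match k with O => (0%nat, 0%nat) | S k' => next k' (nodes k') end).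
    assert (Hinv : forall k, (snd (nodes k) < W (fst (nodes k)))%nat).
    { induction k. simpl. lia. simpl. apply Hnx; auto. }
    set (lft := fun k => INR (snd (nodes k)) / INR (W (fst (nodes k)))).
    set (rgt := fun k => (INR (snd (nodes k)) + 1) / INR (W (fst (nodes k)))).
    assert (Hl : forall k, lft k <= lft (S k)) by (intros k; apply Hnx; auto).
    assert (Hr : forall k, rgt (S k) < rgt k) by (intros k; apply Hnx; auto).
    assert (Hlr : forall k, lft k < rgt k).
    { intros k. unfold lft, rgt. assert (0 < INR (W (fst (nodes k)))) by (apply lt_0_INR; pose proof (W_pos (fst (nodes k))); lia).
      unfold Rdiv. apply Rmult_lt_compat_r. apply Rinv_0_lt_compat; lra. lra. }
    assert (Hl' : forall k d, lft k <= lft (k + d)%nat).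
    { intros k d. induction d. rewrite Nat.add_0_r; lra. replace (k + S d)%nat with (S (k + d)) by lia. specialize (Hl (k+d)%nat). lra. }
    assert (Hr' : forall k d, rgt (k + d)%nat <= rgt k).
    { intros k d. induction d. rewrite Nat.add_0_r; lra. replace (k + S d)%nat with (S (k + d)) by lia. specialize (Hr (k+d)%nat). lra. }
    assert (Hlrk : forall n k, lft n <= rgt k).
    { intros n k. destruct (Compare_dec.le_lt_dec n k).
      - replace k with (n + (k - n))%nat by lia. specialize (Hl' n (k-n)%nat). specialize (Hlr (n + (k-n))%nat). lra.
      - replace n with (k + (n - k))%nat by lia. specialize (Hr' k (n-k)%nat). specialize (Hlr (k + (n-k))%nat). lra. }
    destruct (completeness (fun x => exists n, x = lft n)) as (t & Hub & Hleast).
    { exists (rgt 0%nat). intros x (n & ->). apply Hlrk. }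
    { exists (lft 0%nat). exists 0%nat. auto. }
    assert (Ht1 : forall n, lft n <= t) by (intros n; apply Hub; exists n; auto).
    assert (Ht2 : forall k, t <= rgt k) by (intros k; apply Hleast; intros x (n & ->); apply Hlrk).
    assert (H0 : lft 0%nat = 0) by (unfold lft; simpl; unfold Rdiv; rewrite Rmult_0_l; reflexivity).
    assert (H1 : rgt 0%nat = 1) by (unfold rgt; simpl; field).
    assert (Ht : 0 <= t <= 1) by (split; [rewrite <- H0; auto | rewrite <- H1; auto]).
    assert (Hgr : graph01 f01 (t, f01 t)) by (split; simpl; auto).
    destruct (Hcov _ Hgr) as (n & Hn).
    assert (Hin : inode (fst (nodes (S n))) (snd (nodes (S n))) t).
    { pose proof (Ht1 (S n)). pose proof (Ht2 (S (S n))). pose proof (Hr (S n)).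
      unfold lft, rgt in *. set (w := INR (W (fst (nodes (S n))))) in *.
      assert (0 < w) by (apply lt_0_INR; pose proof (W_pos (fst (nodes (S n)))); lia).
      unfold inode. fold w. split.
      - apply (Rmult_le_reg_r (/ w)). apply Rinv_0_lt_compat; lra.
        rewrite Rmult_assoc, Rinv_r, Rmult_1_r by lra. exact H.
      - apply (Rmult_lt_reg_r (/ w)). apply Rinv_0_lt_compat; lra.
        rewrite Rmult_assoc, Rinv_r, Rmult_1_r by lra. lra. }
    exact (proj2 (proj2 (proj2 (Hnx n (nodes n) (Hinv n)))) t Ht Hin Hn).
Qed.
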